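(* For every compact ordered space $X$, the convex Vietoris hyperspace $\mathbb{V}^{\mathrm{c}}X$ (with its topology and the Egli–Milner order) is a compact ordered space.
   Context: A compact ordered space is a compact Hausdorff space equipped with a partial order that is a closed subset of $X\times X$ (product topology). For a subset $Y$ of a poset, $\uparrow Y$ and $\downarrow Y$ are its up-closure and down-closure; $Y$ is convex if $y_1\le x\le y_2$ with $y_1,y_2\in Y$ implies $x\in Y$; $\updownarrow Y=\uparrow Y\cap\downarrow Y$. For a compact ordered space $X$, $\mathbb{V}^{\mathrm{c}}X$ is the set of closed convex subsets of $X$ (including $\varnothing$), with the topology generated by the sets $\Diamond U=\{K\mid K\cap U\neq\varnothing\}$ and $\Box U=\{K\mid K\subseteq U\}$ for $U$ ranging over open upsets and open downsets of $X$, and ordered by the Egli–Milner order: $K\le_{\mathrm{EM}}L$ iff $\uparrow L\subseteq\uparrow K$ and $\downarrow K\subseteq\downarrow L$. *)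

(* Defs.v *)
From HB Require Import structures.
From mathcomp Require Import all_boot all_order all_algebra.
From mathcomp Require Import all_classical all_reals all_analysis.
Set Implicit Arguments. Unset Strict Implicit. Unset Printing Implicit Defensive.
Local Open Scope classical_set_scope.

Definition upc {T : Type} (le : T -> T -> Prop) (Y : set T) : set T :=
  [set x | exists2 y, Y y & le y x].
Definition downc {T : Type} (le : T -> T -> Prop) (Y : set T) : set T :=
  [set x | exists2 y, Y y & le x y].
Definition is_upset {T : Type} (le : T -> T -> Prop) (Y : set T) : Prop :=
  forall x y, Y x -> le x y -> Y y.
Definition is_downset {T : Type} (le : T -> T -> Prop) (Y : set T) : Prop :=
  forall x y, Y y -> le x y -> Y x.
Definition convex_set {T : Type} (le : T -> T -> Prop) (Y : set T) : Prop :=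
  forall y1 x y2, Y y1 -> Y y2 -> le y1 x -> le x y2 -> Y x.

Definition compact_ordered_space (X : topologicalType) (le : X -> X -> Prop)
  : Prop :=
  hausdorff_space X /\ compact [set: X] /\
  (forall x, le x x) /\
  (forall x y, le x y -> le y x -> x = y) /\
  (forall x y z, le x y -> le y z -> le x z) /\
  closed [set p : X * X | le p.1 p.2].

Definition VC (X : topologicalType) (le : X -> X -> Prop) : Type :=
  {K : set X | closed K /\ convex_set le K}.

HB.instance Definition _ X le := gen_eqMixin (@VC X le).
HB.instance Definition _ X le := gen_choiceMixin (@VC X le).

(* Index type of the subbase: (true, U) stands for Diamond U,
   (false, U) for Box U. *)
Definition VCidx (X : topologicalType) : Type := (bool * set X)%type.
HB.instance Definition _ X := gen_eqMixin (VCidx X).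
HB.instance Definition _ X := gen_choiceMixin (VCidx X).
HB.instance Definition _ X := isPointed.Build (VCidx X) (true, setT).

Definition VC_subbase_dom (X : topologicalType) (le : X -> X -> Prop)
  : set (VCidx X) :=
  [set i | open i.2 /\ (is_upset le i.2 \/ is_downset le i.2)].

Definition Diamond (X : topologicalType) (le : X -> X -> Prop) (U : set X)
  : set (VC le) := [set K | exists2 x, proj1_sig K x & U x].
Definition Box (X : topologicalType) (le : X -> X -> Prop) (U : set X)
  : set (VC le) := [set K | proj1_sig K `<=` U].

Arguments Diamond {X} le U.
Arguments Box {X} le U.

Definition VC_subbase (X : topologicalType) (le : X -> X -> Prop)
  (i : VCidx X) : set (VC le) :=
  if i.1 then Diamond le i.2 else Box le i.2.

Arguments VC_subbase {X} le i.

HB.instance Definition _ X le :=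
  @isSubBaseTopological.Build (@VC X le) (VCidx X)
    (VC_subbase_dom le) (VC_subbase le).

Definition le_EM (X : topologicalType) (le : X -> X -> Prop)
  (K L : VC le) : Prop :=
  upc le (proj1_sig L) `<=` upc le (proj1_sig K) /\
  downc le (proj1_sig K) `<=` downc le (proj1_sig L).

Arguments le_EM {X} le K L.

(* Main.v *)
Require Import Defs.
From HB Require Import structures.
From mathcomp Require Import all_boot all_order all_algebra.
From mathcomp Require Import all_classical all_reals all_analysis.
Set Implicit Arguments. Unset Strict Implicit. Unset Printing Implicit Defensive.
Local Open Scope classical_set_scope.

Section XLemmas.
Context (X : topologicalType) (hX : hausdorff_space X) (cX : compact [set: X]).

Lemma upc_closed (R : X -> X -> Prop) (F : set X) :
  closed [set p : X * X | R p.1 p.2] -> closed F -> closed (upc R F).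
Proof.
move=> clR clF.
have -> : upc R F = snd @` ((F `*` setT) `&` [set p : X * X | R p.1 p.2]).
  apply/seteqP; split => [x [y Fy Ryx]|_ [[y x] [[/= Fy _] Ryx] <-]].
    by exists (y, x).
  by exists y.
apply: compact_closed => //; apply: continuous_compact.
  by apply: continuous_subspaceT => p; exact: cvg_snd.
apply: compact_closedI => //; apply: compact_setX => //.
exact: (subclosed_compact clF cX).
Qed.

Lemma flip_closed (R : X -> X -> Prop) :
  closed [set p : X * X | R p.1 p.2] -> closed [set p : X * X | R p.2 p.1].
Proof.
move=> clR.
have -> : [set p : X * X | R p.2 p.1] =
    (@unstable.swap X X) @^-1` [set p : X * X | R p.1 p.2] by [].
by apply: (proj1 (continuous_closedP _)) clR; exact: swap_continuous.
Qed.

End XLemmas.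

Section Order.
Context (X : topologicalType) (hX : hausdorff_space X) (cX : compact [set: X]).

Lemma shrink_up (R : X -> X -> Prop) (A W : set X) :
  (forall x, R x x) -> (forall x y z, R x y -> R y z -> R x z) ->
  closed [set p : X * X | R p.1 p.2] ->
  closed A -> is_upset R A -> open W -> A `<=` W ->
  exists U, [/\ open U, is_upset R U, A `<=` U & U `<=` W].
Proof.
move=> refl trans clR clA upA oW AW.
have cl : closed (upc (fun a b => R b a) (~` W)).
  apply: upc_closed => //; first exact: flip_closed.
  exact: open_closedC.
exists (~` upc (fun a b => R b a) (~` W)); split.
- by rewrite openC.
- move=> x y nx Rxy [w nWw Rwy]; apply: nx; exists w => //; exact: trans Rwy.
- move=> a Aa [w nWw Rwa]; apply: nWw; apply: AW; exact: upA Rwa.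
- move=> x nx; apply: contrapT => nWx; apply: nx; exists x => //.
Qed.

Lemma normal_sep (A B : set X) : closed A -> closed B ->
  (forall x, A x -> B x -> False) ->
  exists WA WB, [/\ open WA, open WB, A `<=` WA, B `<=` WB &
     forall x, WA x -> WB x -> False].
Proof.
move=> clA clB dAB.
have nX := compact_normal hX cX.
have sn : set_nbhs A (~` B).
  apply/set_nbhsP; exists (~` B); split.
  - by rewrite openC.
  - move=> x Ax Bx; exact: dAB Ax Bx.
  - by [].
have [C snC clCB] := nX A clA _ sn.
exists (interior C), (~` closure C); split.
- exact: open_interior.
- by rewrite openC; exact: closed_closure.
- by move=> x Ax; exact: snC.
- by move=> x Bx /clCB.
- by move=> x /interior_subset Cx; apply; exact: subset_closure.
Qed.


Lemma nachbin (le : X -> X -> Prop) (A B : set X) :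
  (forall x, le x x) -> (forall x y z, le x y -> le y z -> le x z) ->
  closed [set p : X * X | le p.1 p.2] ->
  closed A -> is_upset le A -> closed B -> is_downset le B ->
  (forall x, A x -> B x -> False) ->
  exists U V, [/\ open U, is_upset le U, open V & is_downset le V] /\
     [/\ A `<=` U, B `<=` V & forall x, U x -> V x -> False].
Proof.
move=> refl trans clR clA upA clB dnB dAB.
have [WA [WB [oA oB AWA BWB dW]]] := normal_sep clA clB dAB.
have [U [oU upU AU UW]] := shrink_up refl trans clR clA upA oA AWA.
have [V [oV upV BV VW]] := @shrink_up (fun a b => le b a) B WB refl
  (fun x y z h1 h2 => trans _ _ _ h2 h1) (flip_closed clR) clB
  (fun x y Bx lyx => dnB _ _ Bx lyx) oB BWB.
exists U, V; split; split => //.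
- by move=> x y Vy lxy; exact: upV lxy.
- by move=> x /UW + /VW; exact: dW.
Qed.

End Order.
Section VCt.
Context (X : topologicalType) (le : X -> X -> Prop).

Lemma sub_open i : VC_subbase_dom le i -> open (VC_subbase le i).
Proof.
move=> Di.
exists [set VC_subbase le i]; last by rewrite bigcup_set1.
by move=> _ ->; exact: finI_from1.
Qed.

Lemma sub_cvg (F : set_system (VC le)) (K : VC le) : Filter F ->
  (forall i, VC_subbase_dom le i -> VC_subbase le i K -> F (VC_subbase le i)) ->
  F --> K.
Proof.
move=> FF HF B [B' [[D' sD' <-] [A D'A AK] sB]].
have [E sE AE] := sD' _ D'A.
apply: (filterS sB); apply: (@filterS _ _ _ A); first by move=> y Ay; exists A.
rewrite -AE; apply: filter_bigI => j jE; apply: HF.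
  exact: set_mem (sE j jE).
by move: AK; rewrite -AE; apply.
Qed.
End VCt.

Section Main.
Context (X : topologicalType) (le : X -> X -> Prop)
  (hX : hausdorff_space X) (cX : compact [set: X])
  (refl : forall x, le x x) (anti : forall x y, le x y -> le y x -> x = y)
  (trans : forall x y z, le x y -> le y z -> le x z)
  (cl : closed [set p : X * X | le p.1 p.2]).

Lemma upc_up (S : set X) : is_upset le (upc le S).
Proof. by move=> x y [s Ss lsx] lxy; exists s => //; exact: trans lxy. Qed.

Lemma downc_down (S : set X) : is_downset le (downc le S).
Proof. by move=> x y [s Ss lys] lxy; exists s => //; exact: trans lys. Qed.

Lemma upc_cl (S : set X) : closed S -> closed (upc le S).
Proof. exact: upc_closed. Qed.

Lemma downc_cl (S : set X) : closed S -> closed (downc le S).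
Proof. move=> clS; exact: (@upc_closed _ hX cX (fun a b => le b a) S (flip_closed cl) clS). Qed.

Lemma cl1 (x : X) : closed [set x].
Proof. exact: accessible_closed_set1 (hausdorff_accessible hX) x. Qed.

Lemma sep1 (L : set X) x : closed L -> ~ upc le L x ->
  exists U V, [/\ open U, is_upset le U, open V & is_downset le V] /\
     [/\ L `<=` U, V x & forall y, U y -> V y -> False].
Proof.
move=> clL nx.
have dj : forall z, upc le L z -> downc le [set x] z -> False.
  move=> z [l Ll llz] [_ -> lzx]; apply: nx; exists l => //; exact: trans lzx.
have [U [V [[oU uU oV dV] [AU BV dUV]]]] := @nachbin X hX cX le (upc le L)
  (downc le [set x]) refl trans cl (upc_cl clL) (@upc_up L)
  (downc_cl (@cl1 x)) (@downc_down _) dj.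
exists U, V; split; split => //.
- by move=> l Ll; apply: AU; exists l.
- by apply: BV; exists x.
Qed.

Lemma sep2 (L : set X) x : closed L -> ~ downc le L x ->
  exists U V, [/\ open U, is_upset le U, open V & is_downset le V] /\
     [/\ U x, L `<=` V & forall y, U y -> V y -> False].
Proof.
move=> clL nx.
have dj : forall z, upc le [set x] z -> downc le L z -> False.
  move=> z [_ -> lxz] [l Ll lzl]; apply: nx; exists l => //; exact: trans lzl.
have [U [V [[oU uU oV dV] [AU BV dUV]]]] := @nachbin X hX cX le (upc le [set x])
  (downc le L) refl trans cl (upc_cl (@cl1 x)) (@upc_up _)
  (downc_cl clL) (@downc_down L) dj.
exists U, V; split; split => //.
- by apply: AU; exists x.
- by move=> l Ll; apply: BV; exists l.
Qed.

Lemma conv_in (K : VC le) x :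
  upc le (proj1_sig K) x -> downc le (proj1_sig K) x -> proj1_sig K x.
Proof.
case: K => K [clK cvK] /= [a Ka lax] [b Kb lxb]; exact: cvK Ka Kb lax lxb.
Qed.

Lemma Diamond_open U : open U -> is_upset le U \/ is_downset le U ->
  open (Diamond le U).
Proof. by move=> oU uU; apply: (@sub_open _ le (true, U)). Qed.

Lemma Box_open U : open U -> is_upset le U \/ is_downset le U ->
  open (Box le U).
Proof. by move=> oU uU; apply: (@sub_open _ le (false, U)). Qed.


Lemma sepVC (K L : VC le) x : proj1_sig K x -> ~ proj1_sig L x ->
  exists P Q : set (VC le), [/\ open P, open Q, P K, Q L &
    forall M, P M -> Q M -> False].
Proof.
move=> Kx nLx.
have clL : closed (proj1_sig L) by case: L {nLx} => ? [].
have [nu|nd] : ~ upc le (proj1_sig L) x \/ ~ downc le (proj1_sig L) x.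
  apply: contrapT => /not_orP [/contrapT u /contrapT d]; apply: nLx.
  exact: conv_in.
- have [U [V [[oU uU oV dV] [LU Vx dUV]]]] := sep1 clL nu.
  exists (Diamond le V), (Box le U); split.
  + by apply: Diamond_open => //; right.
  + by apply: Box_open => //; left.
  + by exists x.
  + by [].
  + by move=> M [y My Vy] MU; exact: dUV (MU _ My) Vy.
- have [U [V [[oU uU oV dV] [Ux LV dUV]]]] := sep2 clL nd.
  exists (Diamond le U), (Box le V); split.
  + by apply: Diamond_open => //; left.
  + by apply: Box_open => //; right.
  + by exists x.
  + by [].
  + by move=> M [y My Uy] MV; exact: dUV Uy (MV _ My).
Qed.

Lemma VC_ext (K L : VC le) : proj1_sig K = proj1_sig L -> K = L.
Proof.
case: K L => K hK [L hL] /= eKL; subst L; congr exist; exact: Prop_irrelevance.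
Qed.

Lemma VC_hausdorff : hausdorff_space (VC le).
Proof.
rewrite open_hausdorff => K L nKL.
have nE : ~ (proj1_sig K `<=` proj1_sig L /\ proj1_sig L `<=` proj1_sig K).
  move=> [a b]; have eKL : K = L by apply: VC_ext; apply/seteqP; split.
  by move: nKL; rewrite eKL eqxx.
move: nE => /not_andP [/existsNP [x /not_implyP [Kx nLx]]|
                            /existsNP [x /not_implyP [Lx nKx]]].
- have [P [Q [oP oQ PK QL dPQ]]] := sepVC Kx nLx.
  exists (P, Q); first by split; apply: mem_set.
  split => //; apply/eqP; rewrite -subset0 => M [PM QM]; exact: dPQ PM QM.
- have [P [Q [oP oQ PL QK dPQ]]] := sepVC Lx nKx.
  exists (Q, P); first by split; apply: mem_set.
  split => //; apply/eqP; rewrite -subset0 => M [QM PM]; exact: dPQ PM QM.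
Qed.


Lemma VC_clo (K : VC le) : closed (proj1_sig K).
Proof. by case: K => ? []. Qed.

Lemma EM_closed : closed [set p : VC le * VC le | le_EM le p.1 p.2].
Proof.
move=> [K L] clKL; apply: contrapT => nEM.
have [nu|nd] : ~ (upc le (proj1_sig L) `<=` upc le (proj1_sig K)) \/
    ~ (downc le (proj1_sig K) `<=` downc le (proj1_sig L)).
  by apply: contrapT => /not_orP [/contrapT u /contrapT d]; apply: nEM.
- move: nu => /existsNP [z /not_implyP [[l Ll llz] nKz]].
  have nKl : ~ upc le (proj1_sig K) l.
    by move=> [k Kk lkl]; apply: nKz; exists k => //; exact: trans llz.
  have [U [V [[oU uU oV dV] [KU Vl dUV]]]] := sep1 (@VC_clo K) nKl.
  have nb : nbhs (K, L) (Box le U `*` Diamond le V).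
    exists (Box le U, Diamond le V) => //; split => /=.
    + apply: open_nbhs_nbhs; split; first by apply: Box_open => //; left.
      by move=> y Ky; apply: (uU _ _ (KU _ Ky)).
    + apply: open_nbhs_nbhs; split; first by apply: Diamond_open => //; right.
      by exists l.
  have [[K' L'] [/= [EM1 EM2] [/= K'U [l' L'l' Vl']]]] := clKL _ nb.
  have [k K'k lkl'] := EM1 l' (ex_intro2 _ _ l' L'l' (refl l')).
  exact: dUV (uU _ _ (K'U _ K'k) lkl') Vl'.
- move: nd => /existsNP [z /not_implyP [[k Kk lzk] nLz]].
  have nLk : ~ downc le (proj1_sig L) k.
    by move=> [l Ll lkl]; apply: nLz; exists l => //; exact: trans lkl.
  have [U [V [[oU uU oV dV] [Uk LV dUV]]]] := sep2 (@VC_clo L) nLk.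
  have nb : nbhs (K, L) (Diamond le U `*` Box le V).
    exists (Diamond le U, Box le V) => //; split => /=.
    + apply: open_nbhs_nbhs; split; first by apply: Diamond_open => //; left.
      by exists k.
    + apply: open_nbhs_nbhs; split; first by apply: Box_open => //; right.
      by move=> y Ly; apply: (dV _ _ (LV _ Ly)).
  have [[K' L'] [/= [EM1 EM2] [/= [k' K'k' Uk'] L'V]]] := clKL _ nb.
  have [l L'l lkl] := EM2 k' (ex_intro2 _ _ k' K'k' (refl k')).
  exact: dUV Uk' (dV _ _ (L'V _ L'l) lkl).
Qed.

Lemma EM_anti (K L : VC le) : le_EM le K L -> le_EM le L K -> K = L.
Proof.
move=> [u1 d1] [u2 d2]; apply: VC_ext; apply/seteqP; split => x Hx.
- apply: conv_in.
  + by apply: u2; exists x.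
  + by apply: d1; exists x.
- apply: conv_in.
  + by apply: u1; exists x.
  + by apply: d2; exists x.
Qed.


Lemma VC_compact : compact [set: VC le].
Proof.
rewrite compact_ultra => F UF _.
pose K0 := [set x : X | forall U, open U -> is_upset le U \/ is_downset le U ->
  U x -> F (Diamond le U)].
have clK0 : closed K0.
  move=> x clx U oU uU Ux.
  have [y [K0y Uy]] := clx U (open_nbhs_nbhs (conj oU Ux)).
  exact: K0y U oU uU Uy.
have cvK0 : Defs.convex_set le K0.
  move=> y1 x y2 K1 K2 l1 l2 U oU [uU|dU] Ux.
  - exact: K2 U oU (or_introl uU) (uU _ _ Ux l2).
  - exact: K1 U oU (or_intror dU) (dU _ _ Ux l1).
pose K : VC le := exist _ K0 (conj clK0 cvK0).
exists K; split; first by [].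
apply: sub_cvg => -[[] U] /= [oU uU] /=.
- move=> [x K0x Ux]; exact: K0x U oU uU Ux.
- move=> K0U; apply: contrapT => nF.
  have FC : F (~` Box le U) by case: (in_ultra_setVsetC (Box le U) UF).
  pose S (A : set (VC le)) :=
    [set x : X | ~ U x /\ exists2 M : VC le, A M & proj1_sig M x].
  pose G := filter_from F S.
  have GF : Filter G.
    apply: filter_from_filter; first by exists setT; exact: filterT.
    move=> A B FA FB; exists (A `&` B); first exact: filterI.
    by move=> x [nUx [M [AM BM] Mx]]; split; split => //; exists M.
  have GP : ProperFilter G.
    apply: filter_from_proper => A FA.
    have [M [AM nBM]] : (A `&` ~` Box le U) !=set0 := filter_ex (filterI FA FC).
    have [x Mx nUx] : exists2 x, proj1_sig M x & ~ U x.
      apply: contrapT => nex; apply: nBM => x Mx; apply: contrapT => nUx.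
      by apply: nex; exists x.
    by exists x; split => //; exists M.
  have GnU : G (~` U) by exists setT; [exact: filterT | move=> x []].
  have cU : compact (~` U).
    by apply: (subclosed_compact _ cX) => //; exact: open_closedC.
  have [x [nUx clx]] := cU G GP GnU.
  apply: nUx; apply: K0U => W oW uW Wx.
  apply: contrapT => nFW.
  have FnW : F (~` Diamond le W) by case: (in_ultra_setVsetC (Diamond le W) UF).
  have GS : G (S (~` Diamond le W)) by exists (~` Diamond le W).
  have [y [[nUy [M nWM My]] Wy]] := clx _ W GS (open_nbhs_nbhs (conj oW Wx)).
  by apply: nWM; exists y.
Qed.

End Main.

Unset Implicit Arguments.
Theorem theorem3p6 (X : topologicalType) (le : X -> X -> Prop) :
  compact_ordered_space le -> compact_ordered_space (le_EM le).
Proof.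
move=> [hX [cX [refl [anti [trans cl]]]]].
split; first exact: VC_hausdorff.
split; first exact: VC_compact.
split; first by move=> K; split.
split; first exact: EM_anti.
split; last exact: EM_closed.
move=> K L M [u1 d1] [u2 d2]; split => x Hx.
- exact: u1 (u2 _ Hx).
- exact: d2 (d1 _ Hx).
Qed.
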